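(* Let $m$ be a positive integer and $u,v\in[m]^*$. Then $u\backsim_{[m]}v$ if and only if there exists a rearrangement map $f:\mathbb{P}^*\to\mathbb{P}^*$ that witnesses the Wilf equivalence $u\backsim v$.
   Context: $\mathbb{P}^*$ is the set of finite words over the positive integers (usual order), and $[m]^*\subseteq\mathbb{P}^*$ the words over $[m]=\{1,\ldots,m\}$. For words $u,w$, $u\le w$ (generalized factor order) if there are $|u|$ consecutive letters of $w$ whose $i$-th letter is $\ge$ the $i$-th letter of $u$ for each $i$; $\mathcal{F}(u)=\{w\in\mathbb{P}^*:u\le w\}$. With $\mathrm{wt}(w)=t^{n}x^{\sum_i w_i}$ for $w=w_1\ldots w_n$ and $F(u;t,x)=\sum_{w\in\mathcal{F}(u)}\mathrm{wt}(w)$, $u\backsim v$ iff $F(u;t,x)=F(v;t,x)$. For $w\in[m]^*$ let $c_i(w)$ be the number of occurrences of $i$ in $w$ and $W_{[m]}(w)=\prod_{i=1}^m x_i^{c_i(w)}$; $F(u;x_1,\ldots,x_m)=\sum_{w\in\mathcal{F}(u)\cap[m]^*}W_{[m]}(w)$, and $u\backsim_{[m]}v$ iff $F(u;x_1,\ldots,x_m)=F(v;x_1,\ldots,x_m)$. A rearrangement map witnessing $u\backsim v$ is a weight-preserving bijection $f:\mathbb{P}^*\to\mathbb{P}^*$ such that $f(w)$ is a rearrangement (permutation of the letters) of $w$ for every $w$, and $w\in\mathcal{F}(u)\iff f(w)\in\mathcal{F}(v)$. *)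

(* Defs.v *)
(* Words over the positive integers are represented as
   [seq nat] whose letters are all positive. *)
From mathcomp Require Import all_boot.
Set Implicit Arguments. Unset Strict Implicit. Unset Printing Implicit Defensive.

Definition posword (w : seq nat) : bool := all (fun a => 0 < a) w.

Definition mword (m : nat) (w : seq nat) : bool := all (fun a => 0 < a <= m) w.

Definition gfo (u w : seq nat) : bool :=
  (size u <= size w) &&
  has (fun i => all (fun j => nth 0 u j <= nth 0 w (i + j)) (iota 0 (size u)))
      (iota 0 (size w - size u).+1).

(* weight wt(w) = t^{|w|} x^{sum w}, recorded by the pair (|w|, sum w) *)
Definition wt (w : seq nat) : nat * nat := (size w, sumn w).

(* Coefficient of the monomial W_[m](w0) = prod x_i^{c_i(w0)} in
   F(u; x_1, ..., x_m): the words of [m]^* with the same content as w0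
   are exactly the distinct rearrangements of w0, listed without
   duplicates by [permutations w0]. *)
Definition coefF (u w0 : seq nat) : nat :=
  count (gfo u) (permutations w0).

(* u ~_[m] v : F(u; x_1..x_m) = F(v; x_1..x_m), i.e. all coefficients agree. *)
Definition mwilf (m : nat) (u v : seq nat) : Prop :=
  forall w0, mword m w0 -> coefF u w0 = coefF v w0.

Definition rearrangement_map (u v : seq nat) (f : seq nat -> seq nat) : Prop :=
  (forall w, posword w -> posword (f w)) /\
  {in posword &, injective f} /\
  (forall w', posword w' -> exists2 w, posword w & f w = w') /\
  (forall w, posword w -> wt (f w) = wt w) /\
  (forall w, posword w -> perm_eq (f w) w) /\
  (forall w, posword w -> (gfo u w <-> gfo v (f w))).

(* Main.v *)
Require Import Defs.
From mathcomp Require Import all_boot.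
Set Implicit Arguments. Unset Strict Implicit. Unset Printing Implicit Defensive.

Section Bij.
Variables (T : eqType) (x0 : T) (X : seq T) (p q : pred T).
Definition bij x :=
  if p x then nth x0 (filter q X) (index x (filter p X))
  else nth x0 (filter (predC q) X) (index x (filter (predC p) X)).
Hypothesis hc : count p X = count q X.
Lemma hcC : count (predC p) X = count (predC q) X.
Proof. have := count_predC p X; have := count_predC q X. rewrite hc. move=> <- /eqP; rewrite eqn_add2l => /eqP //. Qed.

Lemma bijL_in x : x \in X -> bij x \in X /\ q (bij x) = p x.
Proof.
move=> xX; rewrite /bij; case px: (p x).
  have hA : x \in filter p X by rewrite mem_filter px.
  have hi : index x (filter p X) < size (filter q X) by rewrite size_filter -hc -size_filter index_mem.
  by have := mem_nth x0 hi; rewrite mem_filter => /andP[-> ->].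
have hA : x \in filter (predC p) X by rewrite mem_filter /= px.
have hi : index x (filter (predC p) X) < size (filter (predC q) X).
  by rewrite size_filter -hcC -size_filter index_mem.
have := mem_nth x0 hi; rewrite mem_filter => /andP[/= /negbTE -> ->]; done.
Qed.

Hypothesis uX : uniq X.
Lemma bijL_inj : {in X &, injective bij}.
Proof.
move=> x y xX yX e.
have pe : p x = p y by rewrite -(bijL_in xX).2 -(bijL_in yX).2 e.
move: e; rewrite /bij -pe; case px: (p x) => e.
  have hx : x \in filter p X by rewrite mem_filter px.
  have hy : y \in filter p X by rewrite mem_filter -pe px.
  have ix : index x (filter p X) < size (filter q X) by rewrite size_filter -hc -size_filter index_mem.
  have iy : index y (filter p X) < size (filter q X) by rewrite size_filter -hc -size_filter index_mem.
  move/eqP: e; rewrite nth_uniq ?filter_uniq // => /eqP e.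
  by rewrite -(nth_index x0 hx) -(nth_index x0 hy) e.
have hx : x \in filter (predC p) X by rewrite mem_filter /= px.
have hy : y \in filter (predC p) X by rewrite mem_filter /= -pe px.
have ix : index x (filter (predC p) X) < size (filter (predC q) X) by rewrite size_filter -hcC -size_filter index_mem.
have iy : index y (filter (predC p) X) < size (filter (predC q) X) by rewrite size_filter -hcC -size_filter index_mem.
move/eqP: e; rewrite nth_uniq ?filter_uniq // => /eqP e.
by rewrite -(nth_index x0 hx) -(nth_index x0 hy) e.
Qed.

Lemma bijL_surj y : y \in X -> exists2 x, x \in X & bij x = y.
Proof.
move=> yX; case qy: (q y).
  have hy : y \in filter q X by rewrite mem_filter qy.
  have iy : index y (filter q X) < size (filter p X) by rewrite size_filter hc -size_filter index_mem.
  set x := nth x0 (filter p X) (index y (filter q X)).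
  have := mem_nth x0 iy; rewrite -/x mem_filter => /andP[px xX].
  exists x => //; rewrite /bij px /x index_uniq ?filter_uniq // nth_index //.
have hy : y \in filter (predC q) X by rewrite mem_filter /= qy.
have iy : index y (filter (predC q) X) < size (filter (predC p) X) by rewrite size_filter hcC -size_filter index_mem.
set x := nth x0 (filter (predC p) X) (index y (filter (predC q) X)).
have := mem_nth x0 iy; rewrite -/x mem_filter => /andP[/= /negbTE px xX].
exists x => //; rewrite /bij px /x index_uniq ?filter_uniq // nth_index //.
Qed.
End Bij.

Section Trunc.
Variable m : nat.
Definition tr x := minn x m.
Definition big := fun x => m <= x.

Fixpoint fill (r h : seq nat) : seq nat :=
  match r with
  | [::] => [::]
  | x :: r' => if x == m then
                 (match h with [::] => x :: fill r' [::] | y :: h' => y :: fill r' h' end)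
               else x :: fill r' h
  end.

Lemma fill_recover w : fill (map tr w) (filter big w) = w.
Proof.
elim: w => //= x w IH; rewrite /tr /big in IH *.
case: (leqP m x) => hx; first by rewrite eqxx IH.
by rewrite (ltn_eqF hx) IH.
Qed.

Lemma fill_props r h : all (fun x => x <= m) r -> all big h ->
  size h = count_mem m r ->
  map tr (fill r h) = r /\ filter big (fill r h) = h.
Proof.
elim: r h => [|x r IH] h /=; first by case: h.
move=> /andP[xm rm] hb; case: (x =P m) => [xe|xnm].
  rewrite xe.
  case: h hb => //= y h /andP[yb hb] [sh].
  have [-> ->] := IH h rm hb sh.
  by rewrite yb /tr (minn_idPr yb).
rewrite /=.
move=> sh; have [-> ->] := IH h rm hb sh.
have xlt : x < m by rewrite ltn_neqAle xm andbT; apply/eqP.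
by rewrite /big leqNgt xlt /tr (minn_idPl (ltnW xlt)).
Qed.

Lemma perm_split w s : perm_eq (map tr w) (map tr s) ->
  perm_eq (filter big w) (filter big s) -> perm_eq w s.
Proof.
move=> /permP h1 /permP h2; rewrite /perm_eq; apply/allP => a _ /=.
case: (leqP m a) => ha.
  have := h2 (pred1 a); rewrite !count_filter.
  have E : forall t, count (predI (pred1 a) big) t = count (pred1 a) t.
    move=> t; apply: eq_count => y /=; rewrite /big.
    by case: eqP => // ->.
  by rewrite !E => ->.
have := h1 (pred1 a); rewrite !count_map.
have E : forall t, count (preim tr (pred1 a)) t = count (pred1 a) t.
  move=> t; apply: eq_count => y /=; rewrite /tr.
  case: (leqP m y) => hy; last by [].
  by rewrite (gtn_eqF ha); apply/esym/eqP => e; move: ha; rewrite -e ltnNge hy.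
by rewrite !E => ->.
Qed.
End Trunc.

Lemma nth_tr m w k : nth 0 (map (tr m) w) k = tr m (nth 0 w k).
Proof. by elim: w k => [|x w IH] [|k] //=; rewrite /tr min0n. Qed.

Lemma gfo_tr m u w : mword m u -> gfo u (map (tr m) w) = gfo u w.
Proof.
move=> /all_nthP mu; rewrite /gfo size_map; congr (_ && _).
apply: eq_has => i /=; apply: eq_in_all => j; rewrite mem_iota add0n => /andP[_ hj].
have /andP[_ ujm] := mu 0 j hj.
by rewrite nth_tr /tr leq_min ujm andbT.
Qed.

Section CT.
Variables (m : nat) (s : seq nat).
Let T := map (tr m) s.
Let H := filter (big m) s.

Lemma r_facts r : perm_eq r T -> all (fun x => x <= m) r /\ count_mem m r = count (big m) s.
Proof.
move=> pr; split.
  rewrite (perm_all _ pr) /T all_map; apply/allP => x _ /=; exact: geq_minr.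
rewrite (permP pr) /T count_map; apply: eq_count => y /=.
by rewrite /tr /big; case: leqP => hy; [rewrite eqxx | rewrite (ltn_eqF hy)].
Qed.

Lemma h_facts h : perm_eq h H -> all (big m) h /\ size h = count (big m) s.
Proof.
move=> ph; rewrite (perm_all _ ph) (perm_size ph) /H filter_all size_filter; done.
Qed.

Lemma fillP r h : perm_eq r T -> perm_eq h H ->
  map (tr m) (fill m r h) = r /\ filter (big m) (fill m r h) = h.
Proof.
move=> pr ph; have [a1 c1] := r_facts pr; have [a2 c2] := h_facts ph.
apply: fill_props => //; by rewrite c1 c2.
Qed.

Let PT := permutations T.
Let PH := permutations H.
Let L2 := [seq fill m r h | r <- PT, h <- PH].

Lemma L2_uniq : uniq L2.
Proof.
apply: allpairs_uniq; rewrite ?permutations_uniq //.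
move=> [r1 h1] [r2 h2] /allpairsP[[a b] [/= ha hb [-> ->]]] /allpairsP[[c d] [/= hc hd [-> ->]]] /= e.
move: ha hb hc hd; rewrite !mem_permutations => ha hb hc hd.
have [e1 e2] := fillP ha hb; have [e3 e4] := fillP hc hd.
have := congr1 (map (tr m)) e; rewrite e1 e3 => ->.
by have := congr1 (filter (big m)) e; rewrite e2 e4 => ->.
Qed.

Lemma L2_mem : L2 =i permutations s.
Proof.
move=> z; rewrite mem_permutations; apply/allpairsP/idP.
  move=> [[r h] [/= hr hh ->]]; move: hr hh; rewrite !mem_permutations => hr hh.
  have [e1 e2] := fillP hr hh.
  by apply: (@perm_split m); rewrite ?e1 ?e2 // /T /H ?perm_map ?perm_filter.
move=> pz; exists (map (tr m) z, filter (big m) z); split => /=.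
- by rewrite mem_permutations perm_map.
- by rewrite mem_permutations perm_filter.
- by rewrite fill_recover.
Qed.

Lemma count_L2 (P : pred (seq nat)) : (forall w, P (map (tr m) w) = P w) ->
  count P (permutations s) = count P PT * size PH.
Proof.
move=> hP.
have -> : count P (permutations s) = count P L2.
  by apply/esym/permP; apply: uniq_perm; rewrite ?L2_uniq ?permutations_uniq //; exact: L2_mem.
rewrite /L2.
have : all (fun r => perm_eq r T) PT by apply/allP => r; rewrite mem_permutations.
elim: PT => [|r X IH] //= /andP[pr aX].
rewrite count_cat IH // count_map mulnDl; congr (_ + _).
have -> : count (preim (fill m r) P) PH = count (fun _ => P r) PH.
  apply: eq_in_count => h; rewrite /PH mem_permutations => ph /=.
  by have [e1 _] := fillP pr ph; rewrite -hP e1.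
by case: (P r); rewrite ?mul1n ?mul0n; [exact: count_predT | exact: count_pred0].
Qed.
End CT.

Lemma mwilf_all m u v : 0 < m -> mword m u -> mword m v -> mwilf m u v ->
  forall s, posword s -> count (gfo u) (permutations s) = count (gfo v) (permutations s).
Proof.
move=> m0 mu mv hw s ps.
rewrite (@count_L2 m s (gfo u) (fun w => gfo_tr w mu)) (@count_L2 m s (gfo v) (fun w => gfo_tr w mv)).
congr (_ * _); apply: hw.
rewrite /mword all_map; apply/allP => x xs /=.
by rewrite /tr geq_minr andbT leq_min m0 (allP ps x xs).
Qed.

Lemma psort w : perm_eq (sort leq w) w.
Proof. by rewrite perm_sort. Qed.

Lemma sortE w1 w2 : perm_eq w1 w2 -> sort leq w1 = sort leq w2.
Proof. by move/(perm_sortP leq_total leq_trans anti_leq). Qed.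

Unset Implicit Arguments.
Theorem theorem8 (m : nat) (u v : seq nat) :
  0 < m -> mword m u -> mword m v ->
  (mwilf m u v <-> exists f : seq nat -> seq nat, rearrangement_map u v f).
Proof.
move=> m0 mu mv; split.
  move=> hw; have hc := mwilf_all m0 mu mv hw.
  pose X w := permutations (sort leq w).
  have hcX w : posword w -> count (gfo u) (X w) = count (gfo v) (X w).
    by move=> pw; apply: hc; rewrite /posword (perm_all _ (psort w)).
  have wX w : w \in X w by rewrite mem_permutations perm_sym perm_sort.
  pose f w := bij [::] (X w) (gfo u) (gfo v) w.
  have fin w : posword w -> f w \in X w /\ gfo v (f w) = gfo u w.
    by move=> pw; apply: bijL_in => //; exact: hcX.
  have fperm w : posword w -> perm_eq (f w) w.
    by move=> pw; have [+ _] := fin w pw; rewrite mem_permutations => h; exact: perm_trans h (psort w).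
  exists f; split; last split; last split; last split; last split.
  - by move=> w pw; rewrite /posword (perm_all _ (fperm w pw)).
  - move=> w1 w2 p1 p2 e.
    have {}p1 : posword w1 := p1; have {}p2 : posword w2 := p2.
    have p12 : perm_eq w1 w2.
      by rewrite -(permPl (fperm w1 p1)) e fperm.
    have XE : X w1 = X w2 by rewrite /X (sortE p12).
    move: e; rewrite /f XE => e.

    have U : uniq (X w2) by exact: permutations_uniq.
    apply: (bijL_inj (x0:=[::]) (hcX w2 p2) U _ _ e); last exact: wX.
    by rewrite -XE.
  - move=> w' pw'.
    have [x xX e] := bijL_surj [::] (hcX w' pw') (permutations_uniq _) (wX w').
    have px : perm_eq x w' by move: xX; rewrite mem_permutations => h; exact: perm_trans h (psort w').
    exists x; first by rewrite /posword (perm_all _ px).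
    by rewrite /f /X (sortE px).
  - by move=> w pw; rewrite /wt (perm_size (fperm w pw)) (perm_sumn (fperm w pw)).
  - exact: fperm.
  - by move=> w pw; have [_ ->] := fin w pw.
move=> [f [fpos [finj [fsurj [fwt [fperm fgfo]]]]]] w0 mw0.
have pw0 : posword w0.
  by apply: sub_all mw0 => x /andP[].
set L := permutations w0.
have posL : forall w, w \in L -> posword w.
  by move=> w; rewrite mem_permutations => pw; rewrite /posword (perm_all _ pw).
have uL : uniq (map f L).
  rewrite map_inj_in_uniq ?permutations_uniq //.
  by move=> x y /posL px /posL py; apply: finj.
have sub : {subset map f L <= L}.
  move=> y /mapP[x xL ->]; rewrite mem_permutations.
  have px := posL x xL; move: xL; rewrite mem_permutations => xw.
  exact: perm_trans (fperm x px) xw.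
have pm : perm_eq (map f L) L.
  apply: uniq_perm => //; first exact: permutations_uniq.
  have [_ E] := uniq_min_size uL sub (eq_leq (esym (size_map f L))).
  exact: E.
rewrite /coefF -/L; transitivity (count (gfo v) (map f L)); last exact: (permP pm).
rewrite count_map; apply: eq_in_count => x xL /=.
by case: (fgfo x (posL x xL)) => h1 h2; apply/idP/idP => [/h1|/h2].
Qed.
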